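(* Let $n,m,\ell$ be positive integers. If $f:\mathcal{D}(n)\to\mathcal{D}(m)$ and $g:\mathcal{D}(m)\to\mathcal{D}(\ell)$ are reducing, then so is $g\circ f:\mathcal{D}(n)\to\mathcal{D}(\ell)$.
   Context: For a positive integer $n$, $\mathcal{D}(n)$ is the set of positive divisors of $n$, and $\lambda(n)$ is the least prime factor of $n$ if $n\ge2$, with $\lambda(1)=1$. For positive integers $m,n$, a function $f:\mathcal{D}(n)\to\mathcal{D}(m)$ is called reducing if for all $d,d'\in\mathcal{D}(n)$: (a) $f(d)\le d$; (b) $\frac{m/f(d)}{n/d}\le\min\{1,\ \lambda(m/f(d))/\lambda(n/d)\}$; (c) if $f(d)=2^if(d')$ for some $i\in\mathbb{Z}$, then $d=2^jd'$ for some $j\in\mathbb{Z}$. *)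

(* Defs.v *)
From mathcomp Require Import all_boot all_order all_algebra.
Set Implicit Arguments. Unset Strict Implicit. Unset Printing Implicit Defensive.
Import Order.TTheory GRing.Theory Num.Theory.

(* lambda(n): least prime factor of n >= 2, lambda(1) = 1.  MathComp's [pdiv]
   is exactly this for n >= 1 (pdiv 1 = 1). *)
Definition lpf (n : nat) : nat := pdiv n.

(* Divisor sets D(n): {d | d %| n}, n > 0.  A function D(n) -> D(m) is
   represented by f : nat -> nat that maps divisors of n to divisors of m
   (values outside D(n) are irrelevant). *)
Definition maps_divisors (n m : nat) (f : nat -> nat) : Prop :=
  forall d, d %| n -> f d %| m.

Definition reducing (n m : nat) (f : nat -> nat) : Prop :=
  maps_divisors n m f /\
  forall d d', d %| n -> d' %| n ->
    [/\ (f d <= d)%N,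
        (((m %/ f d)%:R / (n %/ d)%:R : rat)
           <= Num.min 1 ((lpf (m %/ f d))%:R / (lpf (n %/ d))%:R))%R
      & (exists i : int, (f d)%:R = ((2%:R : rat) ^ i) * (f d')%:R)%R ->
        (exists j : int, d%:R = ((2%:R : rat) ^ j) * d'%:R)%R].

(* Main.v *)
Require Import Defs.
From mathcomp Require Import all_boot all_order all_algebra.
Import Order.TTheory GRing.Theory Num.Theory.

Lemma comp_b (a b c : nat) (la lb lc : nat) :
  (0 < b)%N -> (0 < lb)%N ->
  ((b%:R / a%:R : rat) <= Num.min 1 (lb%:R / la%:R))%R ->
  ((c%:R / b%:R : rat) <= Num.min 1 (lc%:R / lb%:R))%R ->
  ((c%:R / a%:R : rat) <= Num.min 1 (lc%:R / la%:R))%R.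
Proof.
move=> b0 lb0; rewrite !le_min => /andP[h1 h2] /andP[h3 h4].
have e : ((c%:R / a%:R : rat) = (c%:R / b%:R) * (b%:R / a%:R) :> rat)%R.
  by rewrite mulrA divfK // pnatr_eq0 -lt0n.
have e2 : ((lc%:R / la%:R : rat) = (lc%:R / lb%:R) * (lb%:R / la%:R) :> rat)%R.
  by rewrite mulrA divfK // pnatr_eq0 -lt0n.
rewrite e e2; apply/andP; split.
  by rewrite -[1%R]mulr1; apply: ler_pM => //; apply: divr_ge0.
by apply: ler_pM => //; apply: divr_ge0.
Qed.

Theorem lemma3p7 (n m l : nat) (f g : nat -> nat) :
  (0 < n)%N -> (0 < m)%N -> (0 < l)%N ->
  reducing n m f -> reducing m l g -> reducing n l (fun d => g (f d)).
Proof.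
move=> n0 m0 l0 [mf hf] [mg hg]; split.
  by move=> d dn; apply: mg; apply: mf.
move=> d d' dn dn'.
have fdm := mf _ dn; have fdm' := mf _ dn'.
have [fa fb fc] := hf _ _ dn dn'.
have [ga gb gc] := hg _ _ fdm fdm'.
split.
- exact: leq_trans ga fa.
- apply: comp_b fb gb; last exact: pdiv_gt0.
  have fd0 : (0 < f d)%N by apply: dvdn_gt0 m0 fdm.
  by rewrite divn_gt0 // dvdn_leq.
- by move=> /gc /fc.
Qed.
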